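(* Let $S\subseteq\Sigma^*$ and $T\subseteq\Sigma^+$ be regular languages of finite words, and let $T^\omega=\{x_1x_2x_3\cdots : x_i\in T\}$. Then $$\Psi(S\cdot T^\omega)=\{\Psi(y)\oplus\mathfrak{m}_\Gamma \;:\; y\in S\cdot T^*,\ \mathfrak{m}_\Gamma\in I(T)\},$$ where for nonempty $\Gamma\subseteq\Sigma$, $\mathfrak{m}_\Gamma$ is the mask with $\mathfrak{m}_\Gamma(\sigma)=\infty$ iff $\sigma\in\Gamma$, and $I(T)$ is the set of masks $\mathfrak{m}_\Gamma$ ($\emptyset\neq\Gamma\subseteq\Sigma$) such that for every $\sigma\in\Gamma$ there exists $w\in T\cap\Gamma^*$ in which $\sigma$ occurs.
   Context: For a finite word $x$, $\Psi(x)\in\mathbb{N}^\Sigma$ is its Parikh image (number of occurrences of each letter). For an infinite word $w\in\Sigma^\omega$, $\Psi(w)\in\mathbb{N}_\infty^\Sigma$ gives for each letter its number of occurrences if finite and $\infty$ otherwise; $\Psi(L)=\{\Psi(w):w\in L\}$. A mask is a vector in $\{0,\infty\}^\Sigma\setminus\{\vec 0\}$; for $\vec x\in\mathbb{N}^\Sigma$ and a mask $\mathfrak{m}$, $\vec x\oplus\mathfrak{m}$ has coordinate $\vec x(\sigma)$ where $\mathfrak{m}(\sigma)=0$ and $\infty$ where $\mathfrak{m}(\sigma)=\infty$. *)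

(* Defs.v *)
From mathcomp Require Import all_boot.
Set Implicit Arguments. Unset Strict Implicit. Unset Printing Implicit Defensive.

Definition lang (Sigma : finType) := seq Sigma -> Prop.

Record dfa (Sigma : finType) := DFA {
  dfa_state : finType;
  dfa_s0 : dfa_state;
  dfa_acc : pred dfa_state;
  dfa_delta : dfa_state -> Sigma -> dfa_state }.

Definition dfa_accepts (Sigma : finType) (A : dfa Sigma) (w : seq Sigma) : bool :=
  @dfa_acc Sigma A (foldl (@dfa_delta Sigma A) (@dfa_s0 Sigma A) w).

Definition regular (Sigma : finType) (L : lang Sigma) : Prop :=
  exists A : dfa Sigma, forall w, L w <-> dfa_accepts A w.

(* Infinite words: nat -> Sigma.  Extended naturals N_oo: option nat, None = oo. *)
Definition prefix (Sigma : finType) (w : nat -> Sigma) (n : nat) : seq Sigma := mkseq w n.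

(* parikh_inf w v  <->  v = Psi(w): for each letter, v is the number of its
   occurrences in w if finite, and oo (None) if it occurs infinitely often. *)
Definition parikh_inf (Sigma : finType) (w : nat -> Sigma) (v : Sigma -> option nat) : Prop :=
  forall a : Sigma,
    match v a with
    | None => forall N, exists i, N <= i /\ w i = a
    | Some n => exists N, (forall i, N <= i -> w i <> a) /\ count_mem a (prefix w N) = n
    end.

Definition parikh (Sigma : finType) (y : seq Sigma) : Sigma -> nat := fun a => count_mem a y.

Definition mask_add (Sigma : finType) (x : Sigma -> nat) (G : {set Sigma}) : Sigma -> option nat :=
  fun a => if a \in G then None else Some (x a).

(* S . T^omega : s x_1 x_2 ... with s in S, x_i in T. Since the x_i are nonempty
   (T subset Sigma^+), the prefixes s x_1 ... x_n determine the infinite word. *)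
Definition in_S_Tomega (Sigma : finType) (S T : lang Sigma) (w : nat -> Sigma) : Prop :=
  exists s : seq Sigma, exists x : nat -> seq Sigma,
    S s /\ (forall i, T (x i)) /\
    forall n, let u := s ++ flatten (mkseq x n) in prefix w (size u) = u.

Definition in_S_Tstar (Sigma : finType) (S T : lang Sigma) (y : seq Sigma) : Prop :=
  exists s : seq Sigma, exists xs : seq (seq Sigma),
    S s /\ (forall t, t \in xs -> T t) /\ y = s ++ flatten xs.

Definition in_I (Sigma : finType) (T : lang Sigma) (G : {set Sigma}) : Prop :=
  G != set0 /\
  forall a, a \in G -> exists w : seq Sigma, T w /\ all (fun b => b \in G) w /\ a \in w.

(* Main.v *)
Require Import Defs.
From mathcomp Require Import all_boot.
From mathcomp Require Import zify.

Section Aux.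
Variable Sigma : finType.
Variable s : seq Sigma.
Variable x : nat -> seq Sigma.
Definition PP n := s ++ flatten (mkseq x n).

Lemma PP_S n : PP n.+1 = PP n ++ x n.
Proof. by rewrite /PP mkseqS -cats1 flatten_cat /= cats0 catA. Qed.

Lemma PP_ext m d : exists r, PP (m + d) = PP m ++ r.
Proof.
elim: d => [|d [r IH]]; first by exists [::]; rewrite addn0 cats0.
by exists (r ++ x (m + d)); rewrite addnS PP_S IH catA.
Qed.

Lemma size_PP_mono m n : m <= n -> size (PP m) <= size (PP n).
Proof.
move=> le; have [r E] := PP_ext m (n - m).
by rewrite subnKC // in E; rewrite E size_cat leq_addr.
Qed.

Hypothesis xne : forall i, x i <> [::].

Lemma size_PP n : n <= size (PP n).
Proof.
elim: n => [|n IH] //; rewrite PP_S size_cat.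
have := xne n; case: (x n) => //= a l _; lia.
Qed.

Variable w : nat -> Sigma.
Hypothesis Hpre : forall n, Defs.prefix w (size (PP n)) = PP n.

Lemma wnth n i d : i < size (PP n) -> w i = nth d (PP n) i.
Proof. by move=> lt; rewrite -[X in nth _ X _](Hpre n) /Defs.prefix nth_mkseq. Qed.

Lemma wx j q d : q < size (x j) -> w (size (PP j) + q) = nth d (x j) q.
Proof.
move=> lt; rewrite (@wnth j.+1 (size (PP j) + q) d); last by rewrite PP_S size_cat ltn_add2l.
by rewrite PP_S nth_cat ltnNge leq_addr /= addKn.
Qed.

Lemma wloc p m0 : size (PP m0) <= p ->
  exists j q, m0 <= j /\ q < size (x j) /\ p = size (PP j) + q.
Proof.
move=> Hp.
suff H : forall m, p < size (PP m) ->
  exists j q, m0 <= j /\ q < size (x j) /\ p = size (PP j) + q.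
  by apply: (H p.+1); have := size_PP p.+1.
elim=> [|m IH].
  move=> lt; exfalso; move: Hp; rewrite /PP size_cat /= in lt *; rewrite size_cat; lia.
rewrite PP_S size_cat => lt.
case: (ltnP p (size (PP m))) => [/IH //|ge].
exists m, (p - size (PP m)); split; last by split; lia.
case: (leqP m0 m) => // lt2.
have := @size_PP_mono m.+1 m0 lt2; rewrite PP_S size_cat; lia.
Qed.

End Aux.
Arguments PP {Sigma}.
Arguments PP_ext {Sigma}.
Arguments size_PP {Sigma s x}.
Arguments wx {Sigma s x w} Hpre [j q] d.
Arguments wloc {Sigma s x} xne [p m0].

Lemma count_stable (Sigma : finType) (w : nat -> Sigma) (a : Sigma) M d :
  (forall i, M <= i -> w i <> a) ->
  count_mem a (Defs.prefix w (M + d)) = count_mem a (Defs.prefix w M).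
Proof.
move=> H; elim: d => [|d IH]; first by rewrite addn0.
rewrite addnS /Defs.prefix mkseqS -cats1 count_cat -/(Defs.prefix w (M+d)) IH /=.
have /negbTE -> : w (M + d) != a by apply/eqP; apply: H; rewrite leq_addr.
by rewrite !addn0.
Qed.

Lemma choose_words (Sigma : finType) (T : lang Sigma) (G : {set Sigma}) (l : seq Sigma) :
  (forall a, a \in G -> exists w : seq Sigma, T w /\ all (fun b => b \in G) w /\ a \in w) ->
  {subset l <= G} ->
  exists ws : seq (seq Sigma), (forall t, t \in ws -> T t /\ all (fun b => b \in G) t) /\
     (forall a, a \in l -> exists2 t, t \in ws & a \in t).
Proof.
move=> H; elim: l => [|a l IH] sub.
  by exists [::]; split.
have [ws [H1 H2]] : exists ws : seq (seq Sigma), (forall t, t \in ws -> T t /\ all (fun b => b \in G) t) /\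
     (forall a, a \in l -> exists2 t, t \in ws & a \in t).
  by apply: IH => b bl; apply: sub; rewrite inE bl orbT.
have [t [Tt [At aint]]] := H a (sub a (mem_head _ _)).
exists (t :: ws); split.
  by move=> u; rewrite inE => /orP [/eqP -> //|/H1].
move=> b; rewrite inE => /orP [/eqP ->|/H2 [u uw bu]].
  by exists t; rewrite ?mem_head.
by exists u; rewrite // inE uw orbT.
Qed.

Theorem mainTheorem2 (Sigma : finType) (S T : lang Sigma) :
  regular S -> regular T -> (forall t, T t -> t <> [::]) ->
  forall v : Sigma -> option nat,
    (exists w : nat -> Sigma, in_S_Tomega S T w /\ parikh_inf w v) <->
    (exists (y : seq Sigma) (G : {set Sigma}),
        in_S_Tstar S T y /\ in_I T G /\ v =1 mask_add (parikh y) G).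
Proof.
move=> _ _ Tne v; split.
- case=> w [[s [x [HS [HT Hpre]]]] Hpar].
  have xne i : x i <> [::] := Tne _ (HT i).
  have Hpre' : forall n, Defs.prefix w (size (PP s x n)) = PP s x n := Hpre.
  set G := [set a | v a == None].
  have [N HN] : exists N, forall a, a \notin G -> forall i, N <= i -> w i <> a.
    suff: forall l : seq Sigma, exists N, forall a, a \in l -> a \notin G -> forall i, N <= i -> w i <> a.
      by case/(_ (enum Sigma)) => N HN; exists N => a; apply: HN; rewrite mem_enum.
    elim=> [|b l [N IH]]; first by exists 0.
    case Gb: (b \in G).
      exists N => a; rewrite inE => /orP [/eqP -> |]; [by rewrite Gb | exact: IH].
    have := Hpar b; rewrite inE in Gb; case E: (v b) Gb => [n|] // _ [Nb [Hb _]].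
    exists (maxn N Nb) => a; rewrite inE => /orP [/eqP -> _ i le|al aG i le].
      by apply Hb; lia.
    by apply: IH => //; lia.
  have inG i : N <= i -> w i \in G.
    by move=> le; apply/negPn/negP => nG; exact: (HN _ nG i le).
  exists (PP s x N), G; split; [|split].
  + exists s, (mkseq x N); split => //; split => // t.
    by rewrite /mkseq => /mapP [i _ ->].
  + split.
      by apply/set0Pn; exists (w N); apply inG.
    move=> a aG; have := Hpar a; rewrite inE in aG; rewrite (eqP aG) => Hinf.
    have [i [le wi]] := Hinf (size (PP s x N)).
    have [j [q [Nj [qlt Ei]]]] := wloc xne le.
    exists (x j); split; first exact: HT.
    split; last by rewrite -wi Ei (wx Hpre' (w 0) qlt) mem_nth.
    apply/allP => c /(nthP (w 0)) [k klt <-].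
    rewrite -(wx Hpre' (w 0) klt); apply inG.
    have := size_PP (s:=s) xne j; move: Nj; lia.
  + move=> a; rewrite /mask_add; case: ifP => aG.
      by move: aG; rewrite inE => /eqP.
    have nG : a \notin G by rewrite aG.
    have := Hpar a; rewrite inE in aG; case E: (v a) aG => [n|] // _ [Na [HNa Hc]].
    congr Some; symmetry; rewrite /parikh -(Hpre' N).
    set L := size (PP s x N).
    have LN : N <= L := size_PP (s:=s) xne N.
    transitivity (count_mem a (Defs.prefix w (maxn L Na))).
      rewrite -(subnKC (leq_maxl L Na)) count_stable // => i le.
      by apply: (HN _ nG i); lia.
    by rewrite -(subnKC (leq_maxr L Na)) count_stable.
- case=> y [G [[s [xs [HS [HTxs ->]]]] [[G0 HI] Hv]]].
  have sub : {subset enum G <= G} by move=> a; rewrite mem_enum.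
  have [ws [Hws Hcov]] := @choose_words _ T G (enum G) HI sub.
  have [a0 a0G] := set0Pn _ G0.
  have a0e : a0 \in enum G by rewrite mem_enum.
  have [t0 t0ws _] := Hcov a0 a0e.
  have wsn : 0 < size ws by case: ws t0ws {Hws Hcov}.
  pose x := fun i => if i < size xs then nth [::] xs i
                     else nth [::] ws ((i - size xs) %% size ws).
  have xT i : T (x i) /\ (size xs <= i -> all (fun b => b \in G) (x i)).
    rewrite /x; case: ltnP => h.
      split; [apply: HTxs; exact: mem_nth | lia].
    by have [] := Hws (nth [::] ws ((i - size xs) %% size ws)) (mem_nth _ (ltn_pmod _ wsn)).
  have xne i : x i <> [::] := Tne _ (xT i).1.
  pose w := fun i => nth a0 (PP s x i.+1) i.
  have Hpre : forall n, Defs.prefix w (size (PP s x n)) = PP s x n.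
    move=> n; apply: (@eq_from_nth _ a0); first by rewrite size_mkseq.
    move=> i; rewrite size_mkseq => lt; rewrite nth_mkseq // /w.
    set m := maxn n i.+1.
    have [r1 E1] := PP_ext s x n (m - n).
    have [r2 E2] := PP_ext s x i.+1 (m - i.+1).
    rewrite subnKC ?leq_maxl // in E1; rewrite subnKC ?leq_maxr // in E2.
    have lt2 : i < size (PP s x i.+1) := size_PP (s:=s) xne i.+1.
    have H1 : nth a0 (PP s x m) i = nth a0 (PP s x n) i by rewrite E1 nth_cat lt.
    have H2 : nth a0 (PP s x m) i = nth a0 (PP s x i.+1) i by rewrite E2 nth_cat lt2.
    by rewrite -H1 -H2.
  have Py : PP s x (size xs) = s ++ flatten xs.
    rewrite /PP; congr (_ ++ flatten _); apply: (@eq_from_nth _ [::]).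
      by rewrite size_mkseq.
    by move=> i; rewrite size_mkseq => lt; rewrite nth_mkseq // /x lt.
  exists w; split.
    exists s, x; split => //; split; [by move=> i; case: (xT i) | exact: Hpre].
  have inG i : size (s ++ flatten xs) <= i -> w i \in G.
    rewrite -Py => le; have [j [q [Nj [qlt ->]]]] := wloc xne le.
    rewrite (wx Hpre a0 qlt); have /allP := (xT j).2 Nj; apply; exact: mem_nth.
  rewrite /parikh_inf => a; rewrite Hv /mask_add; case: ifP => aG.
  + move=> N; have ae : a \in enum G by rewrite mem_enum.
    have [t tws aint] := Hcov a ae.
    have /(nthP [::]) [k klt Et] := tws.
    pose j := size xs + (N * size ws + k).
    have xj : x j = t.
      by rewrite /x ltnNge leq_addr /= /j addKn modnMDl modn_small.
    have /(nthP a0) [q qlt Eq] := aint.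
    exists (size (PP s x j) + q); split.
      have := size_PP (s:=s) xne j; rewrite /j; nia.
    by rewrite (wx Hpre a0 (_ : q < size (x j))) ?xj.
  + exists (size (s ++ flatten xs)); split.
      by move=> i le wia; move: (inG i le); rewrite wia aG.
    by rewrite -Py Hpre.
Qed.
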